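(* Let $g:\mathbb{R}^m\to\overline{\mathbb{R}}$ be a polyhedral function and $(\bar z,\bar\lambda)\in\mathrm{gph}\,\partial g$. Then $\bar\lambda\in\mathrm{ri}\,\partial g(\bar z)$ if and only if $$D(\partial g)(\bar z,\bar\lambda)(w)=D^*(\partial g)(\bar z,\bar\lambda)(w)\quad\text{for all } w\in\mathbb{R}^m.$$
   Context: A proper function $g:\mathbb{R}^m\to\overline{\mathbb{R}}$ is polyhedral if its epigraph is a polyhedral convex set; $\partial g$ is the convex-analysis subdifferential; $\mathrm{ri}$ is relative interior. For a set $\Omega$ and $\bar x\in\Omega$: $T_\Omega(\bar x)=\limsup_{t\searrow0}(\Omega-\bar x)/t$ (Painlevé–Kuratowski outer limit), $\widehat N_\Omega(\bar x)=T_\Omega(\bar x)^*$ (polar), and the limiting normal cone $N_\Omega(\bar x)$ is the set of $\bar v$ such that there exist $x^k\to\bar x$ in $\Omega$ and $v^k\to\bar v$ with $v^k\in\widehat N_\Omega(x^k)$. The graphical derivative is defined by $u\in D(\partial g)(\bar z,\bar\lambda)(w)\iff(w,u)\in T_{\mathrm{gph}\,\partial g}(\bar z,\bar\lambda)$, and the coderivative by $u\in D^*(\partial g)(\bar z,\bar\lambda)(w)\iff(u,-w)\in N_{\mathrm{gph}\,\partial g}(\bar z,\bar\lambda)$. *)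

(* Defs.v *)
From HB Require Import structures.
From mathcomp Require Import all_boot all_order all_algebra.
From mathcomp Require Import all_classical all_reals all_analysis.
Set Implicit Arguments. Unset Strict Implicit. Unset Printing Implicit Defensive.
Import Order.TTheory GRing.Theory Num.Theory.
Import numFieldNormedType.Exports.
Local Open Scope classical_set_scope.
Local Open Scope ring_scope.

Section Defs.
Variable R : realType.

Definition dotv (n : nat) (u v : 'rV[R]_n) : R := \sum_(i < n) u ord0 i * v ord0 i.

Definition polyhedral_set (n : nat) (S : set 'rV[R]_n) : Prop :=
  exists (k : nat) (A : 'M[R]_(k, n)) (b : 'cV[R]_k),
    S = [set x | forall i : 'I_k, \sum_(j < n) A i j * x ord0 j <= b i ord0].

Definition epigraph (m : nat) (g : 'rV[R]_m -> \bar R) : set 'rV[R]_(m + 1) :=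
  [set p | (g (lsubmx p) <= (rsubmx p ord0 ord0)%:E)%E].

Definition proper_fun (m : nat) (g : 'rV[R]_m -> \bar R) : Prop :=
  (forall x, g x != -oo%E) /\ (exists x, g x != +oo%E).

Definition polyhedral_fun (m : nat) (g : 'rV[R]_m -> \bar R) : Prop :=
  proper_fun g /\ polyhedral_set (epigraph g).

Definition subdiff (m : nat) (g : 'rV[R]_m -> \bar R) (z : 'rV[R]_m) : set 'rV[R]_m :=
  [set v | g z \is a fin_num /\
           forall x, (g z + (dotv v (x - z))%:E <= g x)%E].

Definition aff_hull (n : nat) (C : set 'rV[R]_n) : set 'rV[R]_n :=
  [set y | exists (k : nat) (c : 'I_k -> 'rV[R]_n) (mu : 'I_k -> R),
     (forall i, C (c i)) /\ \sum_(i < k) mu i = 1 /\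
     y = \sum_(i < k) mu i *: c i].

Definition ri (n : nat) (C : set 'rV[R]_n) : set 'rV[R]_n :=
  [set x | C x /\ exists e : R, 0 < e /\ (ball x e `&` aff_hull C) `<=` C].

Definition outer_limit_0 (n : nat) (S : R -> set 'rV[R]_n) : set 'rV[R]_n :=
  [set w | exists (t : nat -> R) (wk : nat -> 'rV[R]_n),
     (forall k, 0 < t k) /\ t @ \oo --> 0 /\ wk @ \oo --> w /\
     (forall k, S (t k) (wk k))].

Definition tangent_cone (n : nat) (O : set 'rV[R]_n) (xb : 'rV[R]_n) : set 'rV[R]_n :=
  outer_limit_0 (fun t => [set w | O (xb + t *: w)]).

Definition polar (n : nat) (K : set 'rV[R]_n) : set 'rV[R]_n :=
  [set v | forall w, K w -> dotv v w <= 0].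

Definition reg_normal_cone (n : nat) (O : set 'rV[R]_n) (xb : 'rV[R]_n) : set 'rV[R]_n :=
  polar (tangent_cone O xb).

Definition lim_normal_cone (n : nat) (O : set 'rV[R]_n) (xb : 'rV[R]_n) : set 'rV[R]_n :=
  [set v | O xb /\ exists (x : nat -> 'rV[R]_n) (vk : nat -> 'rV[R]_n),
     (forall k, O (x k)) /\ x @ \oo --> xb /\ vk @ \oo --> v /\
     (forall k, reg_normal_cone O (x k) (vk k))].

Definition gph (m : nat) (F : 'rV[R]_m -> set 'rV[R]_m) : set 'rV[R]_(m + m) :=
  [set p | F (lsubmx p) (rsubmx p)].

Definition graph_deriv (m : nat) (F : 'rV[R]_m -> set 'rV[R]_m) (z l w : 'rV[R]_m)
  : set 'rV[R]_m :=
  [set u | tangent_cone (gph F) (row_mx z l) (row_mx w u)].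

Definition coderiv (m : nat) (F : 'rV[R]_m -> set 'rV[R]_m) (z l w : 'rV[R]_m)
  : set 'rV[R]_m :=
  [set u | lim_normal_cone (gph F) (row_mx z l) (row_mx u (- w))].

End Defs.

(* Main.v *)
Require Import Defs.
From HB Require Import structures.
From mathcomp Require Import all_boot all_order all_algebra.
From mathcomp Require Import all_classical all_reals all_analysis.
From mathcomp Require Import ring lra.
Import Order.TTheory GRing.Theory Num.Theory.
Import numFieldNormedType.Exports.
Local Open Scope classical_set_scope.
Local Open Scope ring_scope.
Set Implicit Arguments. Unset Strict Implicit. Unset Printing Implicit Defensive.
Section Basics.
Variable R : realType.

Lemma entry_le_norm m n (x : 'M[R]_(m,n)) i j : `|x i j| <= `|x|.
Proof.
have -> : `|x| = mx_norm x by []; rewrite mx_normrE; apply/bigmax_geP; right => /=.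
by exists (i, j).
Qed.

Lemma norm_le_entries m n (x : 'M[R]_(m,n)) c : 0 <= c ->
  (forall i j, `|x i j| <= c) -> `|x| <= c.
Proof.
move=> c0 H; have -> : `|x| = mx_norm x by []; rewrite mx_normrE.
by apply: bigmax_le => // -[i j] _ /=.
Qed.

Lemma dotvC n (u v : 'rV[R]_n) : dotv u v = dotv v u.
Proof. by rewrite /dotv; apply: eq_bigr => i _; rewrite mulrC. Qed.

Lemma dotvDl n (u v w : 'rV[R]_n) : dotv (u + v) w = dotv u w + dotv v w.
Proof. by rewrite /dotv -big_split; apply: eq_bigr => i _; rewrite mxE mulrDl. Qed.

Lemma dotvZl n a (u w : 'rV[R]_n) : dotv (a *: u) w = a * dotv u w.
Proof. by rewrite /dotv mulr_sumr; apply: eq_bigr => i _; rewrite mxE mulrA. Qed.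

Lemma dotvNl n (u w : 'rV[R]_n) : dotv (- u) w = - dotv u w.
Proof. by rewrite -scaleN1r dotvZl mulN1r. Qed.

Lemma dotvBl n (u v w : 'rV[R]_n) : dotv (u - v) w = dotv u w - dotv v w.
Proof. by rewrite dotvDl dotvNl. Qed.

Lemma dotvDr n (u v w : 'rV[R]_n) : dotv w (u + v) = dotv w u + dotv w v.
Proof. by rewrite !(dotvC w) dotvDl. Qed.

Lemma dotvZr n a (u w : 'rV[R]_n) : dotv w (a *: u) = a * dotv w u.
Proof. by rewrite !(dotvC w) dotvZl. Qed.

Lemma dotvNr n (u w : 'rV[R]_n) : dotv w (- u) = - dotv w u.
Proof. by rewrite !(dotvC w) dotvNl. Qed.

Lemma dotvBr n (u v w : 'rV[R]_n) : dotv w (u - v) = dotv w u - dotv w v.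
Proof. by rewrite dotvDr dotvNr. Qed.

Lemma dotv0l n (w : 'rV[R]_n) : dotv 0 w = 0.
Proof. by rewrite /dotv big1 // => i _; rewrite mxE mul0r. Qed.

Lemma dotv0r n (w : 'rV[R]_n) : dotv w 0 = 0.
Proof. by rewrite dotvC dotv0l. Qed.

Lemma dotv_row_mx n1 n2 (a c : 'rV[R]_n1) (b d : 'rV[R]_n2) :
  dotv (row_mx a b) (row_mx c d) = dotv a c + dotv b d.
Proof.
by rewrite /dotv big_split_ord /=; congr (_ + _); apply: eq_bigr => i _;
  rewrite ?row_mxEl ?row_mxEr.
Qed.

Lemma dotv_sum n p (s : 'I_p -> R) (v : 'I_p -> 'rV[R]_n) y :
  dotv (\sum_(i < p) s i *: v i) y = \sum_(i < p) s i * dotv (v i) y.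
Proof.
elim: p s v => [|p IH] s v; first by rewrite !big_ord0 dotv0l.
by rewrite !big_ord_recr /= dotvDl IH dotvZl.
Qed.

Lemma mulmx_sum n p (s : 'rV[R]_p) (V : 'M[R]_(p, n)) :
  s *m V = \sum_(i < p) s 0 i *: row i V.
Proof.
apply/rowP => j; rewrite !mxE summxE; apply: eq_bigr => i _.
by rewrite !mxE.
Qed.

Lemma dotv_ge0 n (u : 'rV[R]_n) : 0 <= dotv u u.
Proof. by apply: sumr_ge0 => i _; rewrite -expr2 sqr_ge0. Qed.

Lemma dotv_gt0 n (u : 'rV[R]_n) : u != 0 -> 0 < dotv u u.
Proof.
move=> u0; rewrite lt0r dotv_ge0 andbT; apply: contra u0 => /eqP H.
apply/eqP/rowP => j; rewrite mxE; apply/eqP; rewrite -sqrf_eq0 expr2.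
move: H; rewrite /dotv => /psumr_eq0P -> //.
by move=> i _ /=; rewrite -expr2 sqr_ge0.
Qed.

Lemma dotv_bound n (a w : 'rV[R]_n) : `|dotv a w| <= (\sum_(j < n) `|a 0 j|) * `|w|.
Proof.
rewrite /dotv mulr_suml; apply: (le_trans (ler_norm_sum _ _ _)).
apply: ler_sum => j _; rewrite normrM; apply: ler_wpM2l => //.
exact: entry_le_norm.
Qed.

End Basics.
Section Cvg.
Variable R : realType.

Lemma cvg_entry {T} {F : set_system T} {FF : Filter F} m n
  (f : T -> 'M[R]_(m,n)) (x : 'M[R]_(m,n)) i j :
  f @ F --> x -> (fun t => f t i j) @ F --> x i j.
Proof.
move=> /cvgrPdist_lt H; apply/cvgrPdist_lt => e e0; near=> t.
have := entry_le_norm (x - f t) i j; rewrite !mxE => /le_lt_trans; apply.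
by near: t; exact: H.
Unshelve. all: by end_near. Qed.

Lemma cvg_entries {T} {F : set_system T} {FF : Filter F} m n
  (f : T -> 'M[R]_(m,n)) (x : 'M[R]_(m,n)) :
  (forall i j, (fun t => f t i j) @ F --> x i j) -> f @ F --> x.
Proof.
move=> H; apply/cvgrPdist_lt => e e0.
have e2 : 0 < e / 2 by lra.
have : \forall t \near F, forall ij : 'I_m * 'I_n,
    `|x ij.1 ij.2 - f t ij.1 ij.2| < e / 2.
  apply: filter_forall => -[i j] /=.
  exact: ((cvgrPdist_lt _ _).1 (H i j) _ e2).
apply: filterS => t Ht; apply: (@le_lt_trans _ _ (e / 2)); last by lra.
apply: norm_le_entries; first by lra.
by move=> i j; rewrite !mxE; apply: ltW; exact: (Ht (i, j)).
Qed.

Lemma cvg_sum_ord {T} {F : set_system T} {FF : Filter F} p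
  (f : 'I_p -> T -> R) (l : 'I_p -> R) :
  (forall i, f i @ F --> l i) ->
  (fun t => \sum_(i < p) f i t) @ F --> \sum_(i < p) l i.
Proof.
elim: p f l => [|p IH] f l H.
  rewrite big_ord0; under eq_fun do rewrite big_ord0; exact: cvg_cst.
rewrite big_ord_recr /=; under eq_fun do rewrite big_ord_recr /=.
apply: cvgD; last exact: H.
exact: (IH (fun i => f (widen_ord (leqnSn p) i))).
Qed.

Lemma cvg_dotv {T} {F : set_system T} {FF : Filter F} n
  (a b : T -> 'rV[R]_n) (a' b' : 'rV[R]_n) :
  a @ F --> a' -> b @ F --> b' ->
  (fun t => dotv (a t) (b t)) @ F --> dotv a' b'.
Proof.
move=> Ha Hb; rewrite /dotv.
have := @cvg_sum_ord T F FF n (fun i t => a t ord0 i * b t ord0 i)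
  (fun i => a' ord0 i * b' ord0 i); apply => i.
by apply: cvgM; apply: cvg_entry.
Qed.

Lemma cvg_lsub {T} {F : set_system T} {FF : Filter F} n1 n2
  (f : T -> 'rV[R]_(n1 + n2)) (x : 'rV[R]_(n1 + n2)) :
  f @ F --> x -> (fun t => lsubmx (f t)) @ F --> lsubmx x.
Proof.
move=> H; apply: cvg_entries => i j; rewrite mxE.
under eq_fun do rewrite mxE.
exact: cvg_entry.
Qed.

Lemma cvg_rsub {T} {F : set_system T} {FF : Filter F} n1 n2
  (f : T -> 'rV[R]_(n1 + n2)) (x : 'rV[R]_(n1 + n2)) :
  f @ F --> x -> (fun t => rsubmx (f t)) @ F --> rsubmx x.
Proof.
move=> H; apply: cvg_entries => i j; rewrite mxE.
under eq_fun do rewrite mxE.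
exact: cvg_entry.
Qed.

Lemma cvg_row_mx {T} {F : set_system T} {FF : Filter F} n1 n2
  (a : T -> 'rV[R]_n1) (b : T -> 'rV[R]_n2) (a' : 'rV[R]_n1) (b' : 'rV[R]_n2) :
  a @ F --> a' -> b @ F --> b' ->
  (fun t => row_mx (a t) (b t)) @ F --> row_mx a' b'.
Proof.
move=> Ha Hb; apply: cvg_entries => i j.
rewrite -[j](@splitK n1 n2); case: (fintype.split j) => k /=.
  rewrite row_mxEl; under eq_fun do rewrite row_mxEl.
  exact: cvg_entry.
rewrite row_mxEr; under eq_fun do rewrite row_mxEr.
exact: cvg_entry.
Qed.

Lemma lim_le {T} {F : set_system T} {FF : ProperFilter F} (f : T -> R) l c :
  f @ F --> l -> (\forall t \near F, f t <= c) -> l <= c.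
Proof.
move=> H1 H2; have := @closed_cvg T R F FF f [set x | x <= c] (@closed_le R c).
by move=> /(_ H2 l H1).
Qed.

Lemma lim_ge {T} {F : set_system T} {FF : ProperFilter F} (f : T -> R) l c :
  f @ F --> l -> (\forall t \near F, c <= f t) -> c <= l.
Proof.
move=> H1 H2; have := @closed_cvg T R F FF f [set x | c <= x] (@closed_ge R c).
by move=> /(_ H2 l H1).
Qed.

Lemma lim_eq {T} {F : set_system T} {FF : ProperFilter F} (f : T -> R) l c :
  f @ F --> l -> (\forall t \near F, f t = c) -> l = c.
Proof.
move=> H1 H2; apply/eqP; rewrite eq_le (lim_le H1) ?(lim_ge H1) //;
  by apply: filterS H2 => t ->.
Qed.

Lemma cvg_charm (c : R) : (fun n => c * @harmonic R n) @ \oo --> 0.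
Proof.
rewrite -(mulr0 c); apply: cvgMl_tmp; exact: cvg_harmonic.
Qed.

End Cvg.
Section Farkas.
Variable R : realType.

Lemma farkas m n (v : 'I_n -> 'rV[R]_m) (u : 'rV[R]_m) :
  (exists s : 'I_n -> R, (forall i, 0 <= s i) /\ u = \sum_(i < n) s i *: v i) \/
  (exists y, (forall i, dotv (v i) y <= 0) /\ 0 < dotv u y).
Proof.
elim: n v u => [|n IH] v u.
  have [->|u0] := eqVneq u 0.
    by left; exists (fun=> 0); split => //; rewrite big_ord0.
  by right; exists u; split => [[]//|]; exact: dotv_gt0.
pose v' := fun j : 'I_n => v (widen_ord (leqnSn n) j).
pose vl := v ord_max.
have wl : forall j : 'I_n, widen_ord (leqnSn n) j = lift ord_max j.
  by move=> j; apply: val_inj; rewrite [RHS]lift_max.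
have ext : forall (s : 'I_n -> R) c, (forall i, 0 <= s i) -> 0 <= c ->
    exists s' : 'I_n.+1 -> R, (forall i, 0 <= s' i) /\
      \sum_(i < n.+1) s' i *: v i = \sum_(i < n) s i *: v' i + c *: vl.
  move=> s c s0 c0.
  exists (fun i => if unlift ord_max i is Some j then s j else c); split.
    by move=> i; case: (unlift ord_max i).
  rewrite big_ord_recr /= unlift_none; congr (_ + _).
  by apply: eq_bigr => j _; rewrite /v' wl liftK.
case: (IH v' u) => [[s [s0 ->]]|[y [yv uy]]].
  by left; have [s' [s'0 Hs']] := ext s 0 s0 (lexx _); exists s'; rewrite Hs' scale0r addr0.
have [vly|vly] := leP (dotv vl y) 0.
  right; exists y; split => // i.
  by case: (unliftP ord_max i) => [j ->|->] //; rewrite -wl; exact: yv.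
set b := dotv vl y.
pose v'' := fun j => v' j - (dotv (v' j) y / b) *: vl.
pose u'' := u - (dotv u y / b) *: vl.
have b0 : b != 0 by rewrite gt_eqF.
case: (IH v'' u'') => [[s [s0 Hs]]|[y' [yv' uy']]].
  left.
  pose c := dotv u y / b - \sum_(j < n) s j * (dotv (v' j) y / b).
  have c0 : 0 <= c.
    rewrite /c subr_ge0; apply: (@le_trans _ _ 0).
      rewrite -oppr_ge0 -sumrN; apply: sumr_ge0 => j _; rewrite oppr_ge0.
      apply: mulr_ge0_le0 => //.
      by rewrite pmulr_lle0 ?invr_gt0 // yv.
    by apply: divr_ge0 => //; exact: ltW.
  have [s' [s'0 Hs']] := ext s c s0 c0; exists s'; split => //; rewrite Hs'.
  have -> : u = u'' + (dotv u y / b) *: vl by rewrite /u'' subrK.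
  rewrite Hs /v'' /c.
  under eq_bigr do rewrite scalerBr scalerA.
  by rewrite sumrB scalerBl -scaler_suml addrA addrAC.
right; exists (y' - (dotv vl y' / b) *: y); split.
  move=> i; case: (unliftP ord_max i) => [j ->|->].
    rewrite -wl; have := yv' j; rewrite /v'' dotvBl dotvZl /v'.
    by rewrite dotvBr dotvZr; congr (_ <= _); field.
  rewrite dotvBr dotvZr -/vl -/b; suff -> : dotv vl y' / b * b = dotv vl y' by rewrite subrr.
  by field.
move: uy'; rewrite /u'' dotvBl dotvZl dotvBr dotvZr -/vl; congr (_ < _).
by rewrite (dotvC vl y'); field.
Qed.

End Farkas.
Section Main.
Variable R : realType.
Variables (m k : nat) (g : 'rV[R]_m -> \bar R) (p : 'I_k -> 'rV[R]_m)
  (q b : 'I_k -> R) (zb lb : 'rV[R]_m).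
Hypothesis hepi : forall x t,
  (g x <= t%:E)%E <-> (forall i, dotv (p i) x + q i * t <= b i).
Hypothesis gNoo : forall x, g x != -oo%E.
Hypothesis hlb : subdiff g zb lb.

Let gb := fine (g zb).
Lemma gzb : g zb = gb%:E.
Proof. by rewrite /gb fineK //; case: hlb. Qed.

Let Act r := dotv (p r) zb + q r * gb == b r.
Let E y s := forall r, Act r -> dotv (p r) y + q r * s <= 0.

Lemma feas r : dotv (p r) zb + q r * gb <= b r.
Proof. by have := (hepi zb gb).1; rewrite -gzb; move=> /(_ (lexx _)). Qed.

Lemma GE y s : (g (zb + y) <= (gb + s)%:E)%E -> E y s.
Proof.
move=> /(hepi _ _).1 H r /eqP Ar; have := H r; rewrite dotvDr mulrDr.
by move: Ar; lra.
Qed.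

Lemma E_scale y s t : 0 <= t -> E y s -> E (t *: y) (t * s).
Proof.
move=> t0 H r Ar; rewrite dotvZr mulrCA -mulrDr.
by apply: mulr_ge0_le0 => //; exact: H.
Qed.

Lemma E_add y s y' s' : E y s -> E y' s' -> E (y + y') (s + s').
Proof.
move=> H H' r Ar; rewrite dotvDr mulrDr.
by have := H r Ar; have := H' r Ar; lra.
Qed.

Lemma LF : exists2 eps : R, 0 < eps & forall y s, `|y| < eps -> `|s| < eps ->
  E y s -> (g (zb + y) <= (gb + s)%:E)%E.
Proof.
pose slack r := b r - (dotv (p r) zb + q r * gb).
pose C r := \sum_(j < m) `|p r 0 j| + `|q r|.
pose M := \big[Num.max/0]_(r < k) (if Act r then 0 else (C r + 1) / slack r).
have M0 : 0 <= M by apply/bigmax_geP; left.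
have slack0 r : ~~ Act r -> 0 < slack r.
  move=> nA; rewrite /slack subr_gt0 lt_neqAle feas andbT.
  by move: nA; rewrite /Act.
have C0 r : 0 <= C r.
  by apply: addr_ge0 => //; apply: sumr_ge0.
have CM r : ~~ Act r -> C r + 1 <= M * slack r.
  move=> nA; rewrite -ler_pdivrMr ?slack0 //.
  by apply/bigmax_geP; right; exists r => //; rewrite (negbTE nA).
exists (1 + M)^-1; first by rewrite invr_gt0; lra.
move=> y s yl sl Eys; apply/(hepi _ _).2 => r.
have [Ar|nAr] := boolP (Act r).
  have := Eys r Ar; move: Ar => /eqP; rewrite dotvDr mulrDr; lra.
have h1 : `|dotv (p r) y + q r * s| <= C r * (1 + M)^-1.
  apply: (le_trans (ler_normD _ _)); rewrite /C mulrDl.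
  apply: lerD.
    apply: (le_trans (dotv_bound _ _)); apply: ler_wpM2l; last exact: ltW.
    by apply: sumr_ge0.
  by rewrite normrM; apply: ler_wpM2l => //; exact: ltW.
have h2 : C r * (1 + M)^-1 < slack r.
  have e0 : 0 < (1 + M)^-1 by rewrite invr_gt0; lra.
  have e1 : (1 + M)^-1 * (1 + M) = 1 by rewrite mulVf //; lra.
  have := CM r nAr; have := slack0 r nAr; have := C0 r; nra.
have := ler_norm (dotv (p r) y + q r * s); rewrite dotvDr mulrDr /slack in h2 *.
lra.
Qed.


Lemma addrKl' (V : zmodType) (x y : V) : x + y - x = y.
Proof. by rewrite addrAC subrr add0r. Qed.

Lemma addrBK' (V : zmodType) (x y : V) : y + (x - y) = x.
Proof. by rewrite addrCA subrr addr0. Qed.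

Lemma small_scale (eps a c : R) : 0 < eps -> 0 <= a -> a <= c ->
  eps / (2 * (c + 1)) * a < eps.
Proof.
move=> e0 a0 ac; have c0 : 0 < c + 1 by lra.
rewrite mulrAC ltr_pdivrMr; last by rewrite mulr_gt0.
nra.
Qed.

Lemma Kchar l : subdiff g zb l <-> forall y s, E y s -> dotv l y <= s.
Proof.
split.
  move=> [_ Kl] y s Eys; have [eps e0 LFe] := LF.
  pose c := `|y| + `|s|.
  have ny := normr_ge0 y; have ns := normr_ge0 s.
  pose th := eps / (2 * (c + 1)).
  have th0 : 0 < th by apply: divr_gt0 => //; apply: mulr_gt0 => //; rewrite /c; lra.
  have Hy : `|th *: y| < eps.
    rewrite normrZ gtr0_norm //; apply: small_scale => //; rewrite /c; lra.
  have Hs : `|th * s| < eps.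
    rewrite normrM gtr0_norm //; apply: small_scale => //; rewrite /c; lra.
  have := LFe _ _ Hy Hs (E_scale (ltW th0) Eys).
  have := Kl (zb + th *: y); rewrite gzb addrKl' -EFinD.
  move=> /le_trans H /H; rewrite lee_fin dotvZr lerD2l ler_pM2l //.
move=> H; split; first by case: hlb.
move=> x; rewrite gzb.
have := gNoo x; case Egx: (g x) => [t| |] // _; last by rewrite leey.
rewrite -EFinD lee_fin.
have := H (x - zb) (t - gb); rewrite -lerBrDl; apply.
by apply: GE; rewrite addrBK' Egx lee_fin addrBK'.
Qed.

Lemma Klb_le y s : E y s -> dotv lb y <= s.
Proof. by move: y s; apply/Kchar. Qed.

Lemma mono z1 z2 l1 l2 : subdiff g z1 l1 -> subdiff g z2 l2 ->
  0 <= dotv (l1 - l2) (z1 - z2).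
Proof.
move=> [f1 H1] [f2 H2]; have := H1 z2; have := H2 z1.
rewrite -(fineK f1) -(fineK f2) -!EFinD !lee_fin.
rewrite dotvBl !dotvBr; lra.
Qed.

Lemma dloc : exists2 eps : R, 0 < eps & forall w l,
  `|w| < eps -> `|dotv lb w| < eps -> `|dotv l w| < eps ->
  subdiff g (zb + w) l -> subdiff g zb l.
Proof.
have [eps e0 LFe] := LF.
exists (eps / 2); first lra.
move=> w l wl lbw lw [fw Hw].
pose S := fine (g (zb + w)).
have gS : g (zb + w) = S%:E by rewrite /S fineK.
have S1 : dotv lb w <= S - gb.
  case: hlb => _ /(_ (zb + w)); rewrite gS gzb addrKl' -EFinD lee_fin; lra.
have S2 : S - gb <= dotv l w.
  have := Hw zb; rewrite gS gzb -EFinD lee_fin opprD addrA subrr add0r dotvNr; lra.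
have ESw : E w (S - gb) by apply: GE; rewrite addrBK' gS.
apply/Kchar => y s Eys.
pose c := `|y| + `|s|.
have ny := normr_ge0 y; have ns := normr_ge0 s.
pose th := (eps / 2) / (2 * (c + 1)).
have th0 : 0 < th by apply: divr_gt0; [lra | apply: mulr_gt0 => //; rewrite /c; lra].
have Hy : `|th *: y| < eps / 2.
  rewrite normrZ gtr0_norm //; apply: small_scale => //; [lra | rewrite /c; lra].
have Hs : `|th * s| < eps / 2.
  rewrite normrM gtr0_norm //; apply: small_scale => //; [lra | rewrite /c; lra].
have Hy' : `|w + th *: y| < eps.
  by apply: (le_lt_trans (ler_normD _ _)); lra.
have Hs' : `|S - gb + th * s| < eps.
  apply: (le_lt_trans (ler_normD _ _)).
  have : `|S - gb| < eps / 2.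
    rewrite ltr_norml; move: lbw lw; rewrite !ltr_norml; lra.
  lra.
have := LFe _ _ Hy' Hs' (E_add ESw (E_scale (ltW th0) Eys)).
rewrite !addrA addrKl'.
have := Hw (zb + w + th *: y); rewrite gS addrKl' -EFinD.
move=> /le_trans H /H; rewrite lee_fin dotvZr lerD2l ler_pM2l //.
Qed.

Let v r : 'rV[R]_m := if Act r then p r + q r *: lb else 0.
Let V : 'M[R]_(k, m) := \matrix_(r < k) v r.
Let Mperp w := forall r, dotv (v r) w = 0.
Let Mset (u : 'rV[R]_m) := (u <= V)%MS.

Lemma v_le r y s : E y s -> dotv (v r) y <= `|q r| * (s - dotv lb y).
Proof.
move=> Eys; have hl := Klb_le Eys.
rewrite /v; case: ifP => Ar; last first.
  by rewrite dotv0l; apply: mulr_ge0 => //; lra.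
have := Eys r Ar; rewrite dotvDl dotvZl.
have hq : - q r <= `|q r| by rewrite -normrN ler_norm.
nra.
Qed.

Lemma Eperp y : (forall r, dotv (v r) y <= 0) -> E y (dotv lb y).
Proof. by move=> H r Ar; have := H r; rewrite /v Ar dotvDl dotvZl. Qed.

Lemma K_le l y : subdiff g zb l -> (forall r, dotv (v r) y <= 0) ->
  dotv l y <= dotv lb y.
Proof. by move=> /Kchar Kl H; apply: Kl; apply: Eperp. Qed.

Lemma cone_K (sg : 'I_k -> R) : (forall r, 0 <= sg r) ->
  \sum_(r < k) sg r * `|q r| <= 1 -> subdiff g zb (lb + \sum_(r < k) sg r *: v r).
Proof.
move=> sg0 sg1; apply/Kchar => y s Eys.
have hl := Klb_le Eys.
rewrite dotvDl dotv_sum.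
have : \sum_(r < k) sg r * dotv (v r) y <= (\sum_(r < k) sg r * `|q r|) * (s - dotv lb y).
  rewrite mulr_suml; apply: ler_sum => r _; rewrite -mulrA.
  by apply: ler_wpM2l => //; apply: v_le.
nra.
Qed.

Lemma vK r t : 0 <= t -> t * `|q r| <= 1 -> subdiff g zb (lb + t *: v r).
Proof.
move=> t0 t1; apply/Kchar => y s Eys.
have hl := Klb_le Eys; have := v_le r Eys.
rewrite dotvDl dotvZl; nra.
Qed.

Lemma vrow r : v r = row r V.
Proof. by rewrite rowK. Qed.

Lemma Mset_v r : Mset (v r).
Proof. by rewrite /Mset vrow row_sub. Qed.

Lemma M_dot u w : Mset u -> Mperp w -> dotv u w = 0.
Proof.
move=> /submxP [D ->] Hw; rewrite mulmx_sum dotv_sum big1 // => r _.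
by rewrite -vrow Hw mulr0.
Qed.

Lemma dotv_col n n' (a : 'rV[R]_n) (C : 'M[R]_(n, n')) j :
  dotv a (col j C)^T = (a *m C) 0 j.
Proof. by rewrite /dotv !mxE; apply: eq_bigr => i _; rewrite !mxE. Qed.

Lemma M_dual u : (forall w, Mperp w -> dotv u w = 0) -> Mset u.
Proof.
move=> H; rewrite /Mset submxE; apply/eqP/rowP => j; rewrite [RHS]mxE.
rewrite -dotv_col; apply: H => r.
by rewrite dotv_col vrow -row_mul mulmx_coker !mxE.
Qed.

Lemma K_sub l : subdiff g zb l -> Mset (l - lb).
Proof.
move=> Kl; apply: M_dual => w Hw.
have h1 : dotv l w <= dotv lb w by apply: K_le => // r; rewrite Hw.
have h2 : dotv l (- w) <= dotv lb (- w).
  by apply: K_le => // r; rewrite dotvNr Hw oppr0.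
move: h2; rewrite !dotvNr dotvBl; lra.
Qed.

Let tau r : R := (1 + `|q r|)^-1.

Lemma tau_gt0 r : 0 < tau r.
Proof. by rewrite invr_gt0; have := normr_ge0 (q r); lra. Qed.

Lemma tau_le r : tau r * `|q r| <= 1.
Proof.
have := normr_ge0 (q r) => h.
rewrite /tau mulrC ler_pdivrMr; lra.
Qed.

Lemma M_aff mu : Mset mu -> aff_hull (subdiff g zb) (lb + mu).
Proof.
move=> /submxP [D ->]; rewrite mulmx_sum.
pose c (i : 'I_k.+1) := if unlift ord0 i is Some r then lb + tau r *: v r else lb.
pose X := \sum_(r < k) D 0 r / tau r.
pose mu' (i : 'I_k.+1) := if unlift ord0 i is Some r then D 0 r / tau r else 1 - X.
exists k.+1, c, mu'; split; [|split].
- move=> i; rewrite /c; case: (unlift ord0 i) => [r|] //.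
  by apply: vK; [exact: ltW (tau_gt0 r) | exact: tau_le].
- rewrite big_ord_recl /mu' unlift_none.
  rewrite (eq_bigr (fun r => D 0 r / tau r)); last first.
    by move=> r _; rewrite (liftK (@ord0 k) r).
  by rewrite -/X subrK.
rewrite big_ord_recl /mu' /c unlift_none.
rewrite [in RHS](eq_bigr (fun r => (D 0 r / tau r) *: lb + D 0 r *: v r)); last first.
  move=> r _; rewrite (liftK (@ord0 k) r) scalerDr scalerA divfK //.
  by rewrite gt_eqF // tau_gt0.
rewrite big_split /= -scaler_suml -/X addrA -scalerDl subrK scale1r.
by congr (_ + _); apply: eq_bigr => r _; rewrite vrow.
Qed.

Lemma aff_M l : aff_hull (subdiff g zb) l -> Mset (l - lb).
Proof.
move=> [n [c [mu [Kc [S1 ->]]]]].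
have -> : \sum_(i < n) mu i *: c i - lb = \sum_(i < n) mu i *: (c i - lb).
  rewrite -[lb in LHS]scale1r -S1 scaler_suml -sumrB.
  by apply: eq_bigr => i _; rewrite scalerBr.
by apply: summx_sub => i _; apply: scalemx_sub; apply: K_sub.
Qed.

Let G := gph (subdiff g).
Let X := row_mx zb lb.

Lemma GE2 z l : G (row_mx z l) = subdiff g z l.
Proof. by rewrite /G /gph /= row_mxKl row_mxKr. Qed.

Lemma split_pt (z0 l0 : 'rV[R]_m) t (W : 'rV[R]_(m + m)) :
  row_mx z0 l0 + t *: W = row_mx (z0 + t *: lsubmx W) (l0 + t *: rsubmx W).
Proof. by rewrite -{1}[W]hsubmxK scale_row_mx add_row_mx. Qed.

Lemma harm_le1 n : @harmonic R n <= 1.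
Proof. by rewrite /harmonic /= invf_le1 ?ler1n // ltr0Sn. Qed.

Lemma TC_intro (O : set 'rV[R]_(m + m)) Y W c : 0 < c ->
  (forall t, 0 < t -> t <= c -> O (Y + t *: W)) -> tangent_cone O Y W.
Proof.
move=> c0 H; exists (fun j => c * harmonic j), (fun=> W); split; [|split; [|split]].
- by move=> j; apply: mulr_gt0 => //; exact: harmonic_gt0.
- exact: cvg_charm.
- exact: cvg_cst.
move=> j; apply: H; first by apply: mulr_gt0 => //; exact: harmonic_gt0.
by rewrite ler_piMr ?harm_le1 // ltW.
Qed.

Lemma dloc_seq (z l : nat -> 'rV[R]_m) :
  z @ \oo --> zb -> l @ \oo --> lb ->
  (\forall n \near \oo, subdiff g (z n) (l n)) ->
  \forall n \near \oo, subdiff g zb (l n).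
Proof.
move=> zc lc Hs; have [eps e0 Hd] := dloc.
have wc : (fun n => z n - zb) @ \oo --> (0 : 'rV[R]_m).
  by rewrite -(subrr zb); apply: cvgB => //; exact: cvg_cst.
have h1 : (fun n => dotv lb (z n - zb)) @ \oo --> (0:R).
  by rewrite -(dotv0r lb); apply: cvg_dotv => //; exact: cvg_cst.
have h2 : (fun n => dotv (l n) (z n - zb)) @ \oo --> (0:R).
  by rewrite -(dotv0r lb); apply: cvg_dotv.
near=> n; apply: (Hd (z n - zb)).
- by near: n; exact: (cvgr0_norm_lt _ wc _ e0).
- by near: n; exact: (cvgr0_norm_lt _ h1 _ e0).
- by near: n; exact: (cvgr0_norm_lt _ h2 _ e0).
by rewrite addrBK'; near: n.
Unshelve. all: by end_near. Qed.

Lemma ri_ball : ri (subdiff g zb) lb -> exists2 e : R, 0 < e &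
  forall mu, Mset mu -> `|mu| < e -> subdiff g zb (lb + mu).
Proof.
move=> [_ [e [e0 H]]]; exists e => // mu Mmu mue; apply: H; split.
  by rewrite -ball_normE /ball_ /= opprD addrA subrr add0r normrN.
exact: M_aff.
Qed.

Lemma LS_in : ri (subdiff g zb) lb -> exists2 d : R, 0 < d &
  forall w mu, `|w| < d -> `|mu| < d -> Mperp w -> Mset mu ->
    subdiff g (zb + w) (lb + mu).
Proof.
move=> hri; have [e e0 He] := ri_ball hri; have [eps eps0 LFe] := LF.
pose C := \sum_(j < m) `|lb 0 j|.
have C0 : 0 <= C by apply: sumr_ge0.
exists (Num.min e (eps / (C + 1))).
  by rewrite lt_min e0 /=; apply: divr_gt0 => //; lra.
move=> w mu; rewrite !lt_min => /andP [_ wl] /andP [mul _] Pw Mmu.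
have Kmu := He _ Mmu mul.
have wl' : `|w| < eps.
  apply: (lt_le_trans wl); rewrite ler_pdivrMr; last by lra.
  by rewrite ler_peMr //; lra.
have lbw : `|dotv lb w| < eps.
  apply: (le_lt_trans (dotv_bound _ _)); rewrite -/C.
  move: wl; rewrite ltr_pdivlMr; last by lra.
  by have := normr_ge0 w; nra.
have Ew : E w (dotv lb w) by apply: Eperp => r; rewrite Pw.
have H1 := LFe _ _ wl' lbw Ew.
have muw : dotv mu w = 0 by apply: M_dot.
have gfin : g (zb + w) \is a fin_num.
  move: H1 (gNoo (zb + w)); case: (g (zb + w)) => //.
split => // x.
case: Kmu => _ /(_ x); rewrite gzb => H2.
rewrite -(fineK gfin); apply: le_trans H2.
move: H1; rewrite -(fineK gfin) -!EFinD !lee_fin.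
rewrite opprD addrA dotvBr (dotvDl lb mu w) muw addr0; lra.
Qed.

Lemma LS_out (z l : nat -> 'rV[R]_m) : ri (subdiff g zb) lb ->
  z @ \oo --> zb -> l @ \oo --> lb ->
  (\forall n \near \oo, subdiff g (z n) (l n)) ->
  \forall n \near \oo, Mperp (z n - zb) /\ Mset (l n - lb).
Proof.
move=> hri zc lc Hs; have [e e0 He] := ri_ball hri.
have Kn := dloc_seq zc lc Hs.
have lc' : (fun n => l n - lb) @ \oo --> (0 : 'rV[R]_m).
  by rewrite -(subrr lb); apply: cvgB => //; exact: cvg_cst.
have e2 : 0 < e / 2 by lra.
near=> n.
have Kl : subdiff g zb (l n) by near: n.
have Ml := K_sub Kl.
have sn : subdiff g (z n) (l n) by near: n.
have ln : `|l n - lb| < e / 2 by near: n; exact: (cvgr0_norm_lt _ lc' _ e2).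
split => // r.
pose dl := e / (2 * (`|v r| + 1)).
have dl0 : 0 < dl by apply: divr_gt0 => //; have := normr_ge0 (v r); nra.
have dlv : dl * `|v r| < e / 2.
  rewrite /dl mulrAC ltr_pdivrMr; last by have := normr_ge0 (v r); nra.
  by have := normr_ge0 (v r); nra.
have key : forall s : R, `|s| <= dl -> 0 <= - s * dotv (v r) (z n - zb).
  move=> s sd.
  have M2 : Mset (l n - lb + s *: v r) by apply: addmx_sub => //; apply: scalemx_sub; exact: Mset_v.
  have n2 : `|l n - lb + s *: v r| < e.
    apply: (le_lt_trans (ler_normD _ _)); rewrite normrZ.
    have : `|s| * `|v r| <= dl * `|v r| by apply: ler_wpM2r.
    lra.
  have := mono sn (He _ M2 n2).
  by rewrite addrA addrBK' opprD addrA subrr add0r -scaleNr dotvZl.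
have := key dl; have := key (- dl); rewrite opprK normrN gtr0_norm //.
move=> /(_ (lexx _)) h1 /(_ (lexx _)) h2.
have a : 0 <= dotv (v r) (z n - zb) by rewrite -(pmulr_rge0 _ dl0).
have bb : dotv (v r) (z n - zb) <= 0.
  by move: h2; rewrite mulNr oppr_ge0 pmulr_rle0.
by apply/eqP; rewrite eq_le a bb.
Unshelve. all: by end_near. Qed.

Lemma TG_sub W : ri (subdiff g zb) lb -> tangent_cone G X W ->
  Mperp (lsubmx W) /\ Mset (rsubmx W).
Proof.
move=> hri [t [wk [t0 [tc [wc Hk]]]]].
pose z j := zb + t j *: lsubmx (wk j).
pose l j := lb + t j *: rsubmx (wk j).
have zc : z @ \oo --> zb.
  rewrite -[X in _ --> X]addr0 -(scale0r (lsubmx W)); apply: cvgD; first exact: cvg_cst.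
  by apply: cvgZ => //; exact: cvg_lsub.
have lc : l @ \oo --> lb.
  rewrite -[X in _ --> X]addr0 -(scale0r (rsubmx W)); apply: cvgD; first exact: cvg_cst.
  by apply: cvgZ => //; exact: cvg_rsub.
have Hs : \forall n \near \oo, subdiff g (z n) (l n).
  by apply: nearW => j; have := Hk j; rewrite /= /X split_pt GE2.
have HL := LS_out hri zc lc Hs.
have tn0 j : t j != 0 by rewrite gt_eqF.
split.
  move=> r; apply: (@lim_eq R nat \oo _ (fun j => dotv (v r) (lsubmx (wk j)))).
    by apply: cvg_dotv; [exact: cvg_cst | exact: cvg_lsub].
  apply: filterS HL => j [Pj _]; have := Pj r.
  by rewrite /z addrKl' dotvZr => /eqP; rewrite mulf_eq0 (negbTE (tn0 j)) /= => /eqP.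
apply: M_dual => w Pw.
apply: (@lim_eq R nat \oo _ (fun j => dotv (rsubmx (wk j)) w)).
  by apply: cvg_dotv; [exact: cvg_rsub | exact: cvg_cst].
apply: filterS HL => j [_ Mj]; apply: M_dot => //.
have := scalemx_sub (t j)^-1 Mj; rewrite /l addrKl' scalerA mulVf // scale1r.
exact.
Qed.

Lemma TC_at (z0 l0 : 'rV[R]_m) (d : R) y nu : 0 < d ->
  (forall w mu, `|w| < d -> `|mu| < d -> Mperp w -> Mset mu ->
    subdiff g (zb + w) (lb + mu)) ->
  `|z0 - zb| < d / 2 -> `|l0 - lb| < d / 2 -> Mperp (z0 - zb) -> Mset (l0 - lb) ->
  Mperp y -> Mset nu -> tangent_cone G (row_mx z0 l0) (row_mx y nu).
Proof.
move=> d0 HL zl ll Pz Ml Py Mnu.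
pose c := d / 2 / (2 * ((`|y| + `|nu|) + 1)).
have ny := normr_ge0 y; have nn := normr_ge0 nu.
apply: (TC_intro (c := c)).
  by apply: divr_gt0; [lra | apply: mulr_gt0 => //; lra].
move=> t t0 tc; rewrite split_pt row_mxKl row_mxKr GE2.
have sy : t * `|y| < d / 2.
  apply: (le_lt_trans _ (small_scale (eps := d / 2) (c := `|y| + `|nu|) _ ny _)); try lra.
  by apply: ler_wpM2r.
have sn : t * `|nu| < d / 2.
  apply: (le_lt_trans _ (small_scale (eps := d / 2) (c := `|y| + `|nu|) _ nn _)); try lra.
  by apply: ler_wpM2r.
have := HL (z0 - zb + t *: y) (l0 - lb + t *: nu).
rewrite !addrA !addrKl'; apply.
- apply: (le_lt_trans (ler_normD _ _)); rewrite normrZ gtr0_norm //; lra.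
- apply: (le_lt_trans (ler_normD _ _)); rewrite normrZ gtr0_norm //; lra.
- by move=> r; rewrite dotvDr dotvZr Pz Py mulr0 addr0.
- by apply: addmx_sub => //; apply: scalemx_sub.
Qed.

Lemma GE3 z l : gph (subdiff g) (row_mx z l) = subdiff g z l.
Proof. by rewrite /gph /= row_mxKl row_mxKr. Qed.

Lemma orth_normal Y V' W : reg_normal_cone G Y V' -> tangent_cone G Y W ->
  tangent_cone G Y (- W) -> dotv V' W = 0.
Proof.
move=> HN T1 T2; have h1 := HN W T1; have h2 := HN _ T2.
by move: h2; rewrite dotvNr oppr_le0 => h2; apply/eqP; rewrite eq_le h1 h2.
Qed.

Lemma Mperp0 : Mperp 0.
Proof. by move=> r; rewrite dotv0r. Qed.

Lemma MperpN y : Mperp y -> Mperp (- y).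
Proof. by move=> H r; rewrite dotvNr H oppr0. Qed.

Lemma Mset0 : Mset 0.
Proof. exact: sub0mx. Qed.

Lemma MsetN y : Mset y -> Mset (- y).
Proof. by move=> H; rewrite /Mset eqmx_opp. Qed.

Lemma dir1 : ri (subdiff g zb) lb -> forall w,
  graph_deriv (subdiff g) zb lb w = coderiv (subdiff g) zb lb w.
Proof.
move=> hri w; have [d d0 HL] := LS_in hri.
have d2 : 0 < d / 2 by lra.
have TGi : forall w' u', Mperp w' -> Mset u' -> tangent_cone G X (row_mx w' u').
  move=> w' u' Pw Mu; apply: (TC_at d0 HL) => //; rewrite ?subrr ?normr0 //.
    exact: Mperp0.
  exact: Mset0.
apply/seteqP; split => u /= Hu.
  have [P1 M1] := TG_sub hri Hu; rewrite row_mxKl in P1; rewrite row_mxKr in M1.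
  split; first by rewrite GE3.
  exists (fun=> X), (fun=> row_mx u (- w)); split; [|split; [|split]].
  - by move=> _; rewrite /X GE3.
  - exact: cvg_cst.
  - exact: cvg_cst.
  move=> _ W TW; have [P2 M2] := TG_sub hri TW.
  rewrite -[W]hsubmxK dotv_row_mx (M_dot M1 P2) dotvNl dotvC (M_dot M2 P1).
  by rewrite oppr0 addr0.
case: Hu => _ [x [vk [Gx [xc [vc Hn]]]]].
pose z n := lsubmx (x n); pose l n := rsubmx (x n).
have zc : z @ \oo --> zb by rewrite -(row_mxKl zb lb); exact: cvg_lsub.
have lc : l @ \oo --> lb by rewrite -(row_mxKr zb lb); exact: cvg_rsub.
have Hs : \forall n \near \oo, subdiff g (z n) (l n).
  by apply: nearW => n; exact: Gx.
have HLo := LS_out hri zc lc Hs.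
have zc' : (fun n => z n - zb) @ \oo --> (0 : 'rV[R]_m).
  by rewrite -(subrr zb); apply: cvgB => //; exact: cvg_cst.
have lc' : (fun n => l n - lb) @ \oo --> (0 : 'rV[R]_m).
  by rewrite -(subrr lb); apply: cvgB => //; exact: cvg_cst.
have Tn : \forall n \near \oo, forall y nu, Mperp y -> Mset nu ->
    tangent_cone G (x n) (row_mx y nu).
  near=> n => y nu Py Mnu; rewrite -[x n]hsubmxK.
  have [Pn Mn] : Mperp (z n - zb) /\ Mset (l n - lb) by near: n.
  apply: (TC_at d0 HL) => //.
  - by near: n; exact: (cvgr0_norm_lt _ zc' _ d2).
  - by near: n; exact: (cvgr0_norm_lt _ lc' _ d2).
have Ort : \forall n \near \oo, forall y nu, Mperp y -> Mset nu ->
    dotv (vk n) (row_mx y nu) = 0.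
  apply: filterS Tn => n Tn' y nu Py Mnu; apply: orth_normal (Hn n) (Tn' _ _ Py Mnu) _.
  by rewrite opp_row_mx; apply: Tn'; [exact: MperpN | exact: MsetN].
have Mu : Mset u.
  apply: M_dual => y Py.
  apply: (@lim_eq R nat \oo _ (fun n => dotv (lsubmx (vk n)) y)).
    rewrite -(row_mxKl u (- w)); apply: cvg_dotv; [exact: cvg_lsub | exact: cvg_cst].
  apply: filterS Ort => n /(_ y 0 Py Mset0).
  by rewrite -[vk n]hsubmxK dotv_row_mx row_mxKl dotv0r addr0.
have Pw : Mperp w.
  move=> r; apply/eqP; rewrite -oppr_eq0 -dotvNr dotvC; apply/eqP.
  apply: (@lim_eq R nat \oo _ (fun n => dotv (rsubmx (vk n)) (v r))).
    rewrite -(row_mxKr u (- w)); apply: cvg_dotv; [exact: cvg_rsub | exact: cvg_cst].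
  apply: filterS Ort => n /(_ 0 (v r) Mperp0 (Mset_v r)).
  by rewrite -[vk n]hsubmxK dotv_row_mx row_mxKr dotv0r add0r.
exact: TGi.
Unshelve. all: by end_near. Qed.

Lemma stepA r : coderiv (subdiff g) zb lb 0 (- v r).
Proof.
split; first by rewrite GE3.
pose s n := tau r * @harmonic R n.
have s0 n : 0 < s n by apply: mulr_gt0; [exact: tau_gt0 | exact: harmonic_gt0].
exists (fun n => row_mx zb (lb + s n *: v r)), (fun=> row_mx (- v r) (- 0)).
split; [|split; [|split]].
- move=> n; rewrite GE3; apply: vK; first exact: ltW.
  apply: le_trans (tau_le r); rewrite /s -mulrA ler_pM2l ?tau_gt0 //.
  by rewrite ler_piMl ?harm_le1.
- apply: cvg_row_mx; first exact: cvg_cst.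
  rewrite -[X in _ --> X](addr0 lb) -(scale0r (v r)); apply: cvgD; first exact: cvg_cst.
  by apply: cvgZ; [exact: cvg_charm | exact: cvg_cst].
- exact: cvg_cst.
move=> n W [t [wk [t0 [tc [wc Hk]]]]].
rewrite -[W]hsubmxK dotv_row_mx oppr0 dotv0l addr0 dotvNl oppr_le0.
pose f j := s n * dotv (v r) (lsubmx (wk j)) + t j * dotv (rsubmx (wk j)) (lsubmx (wk j)).
have fc : f @ \oo --> s n * dotv (v r) (lsubmx W) + 0 * dotv (rsubmx W) (lsubmx W).
  apply: cvgD.
    by apply: cvgMl_tmp; apply: cvg_dotv; [exact: cvg_cst | exact: cvg_lsub].
  by apply: cvgM => //; apply: cvg_dotv; [exact: cvg_rsub | exact: cvg_lsub].
rewrite mul0r addr0 in fc.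
rewrite -(pmulr_rge0 _ (s0 n)); apply: (lim_ge fc); apply: nearW => j.
have := Hk j; rewrite /= split_pt GE3 => Hj.
have := mono Hj hlb.
have -> : lb + s n *: v r + t j *: rsubmx (wk j) - lb = s n *: v r + t j *: rsubmx (wk j).
  by rewrite -(addrA lb) addrKl'.
rewrite addrKl' dotvDl !dotvZl !dotvZr => H.
rewrite /f -(pmulr_rge0 _ (t0 j)).
have e : t j * (s n * dotv (v r) (lsubmx (wk j)) + t j * dotv (rsubmx (wk j)) (lsubmx (wk j)))
  = s n * (t j * dotv (v r) (lsubmx (wk j))) + t j * (t j * dotv (rsubmx (wk j)) (lsubmx (wk j))).
  by ring.
by rewrite e.
Qed.

Lemma stepC (Heq : forall w, graph_deriv (subdiff g) zb lb w = coderiv (subdiff g) zb lb w) r :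
  exists sg : 'I_k -> R, (forall s, 0 <= sg s) /\ - v r = \sum_(s < k) sg s *: v s.
Proof.
have TD : graph_deriv (subdiff g) zb lb 0 (- v r) by rewrite Heq; exact: stepA.
case: (farkas v (- v r)) => // [[y [yv vy]]]; exfalso.
case: TD => t [wk [t0 [tc [wc Hk]]]].
pose z j := zb + t j *: lsubmx (wk j).
pose l j := lb + t j *: rsubmx (wk j).
have zc : z @ \oo --> zb.
  rewrite -[X in _ --> X]addr0 -(scale0r (lsubmx (row_mx (0 : 'rV[R]_m) (- v r)))).
  apply: cvgD; first exact: cvg_cst.
  by apply: cvgZ => //; exact: cvg_lsub.
have lc : l @ \oo --> lb.
  rewrite -[X in _ --> X]addr0 -(scale0r (rsubmx (row_mx (0 : 'rV[R]_m) (- v r)))).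
  apply: cvgD; first exact: cvg_cst.
  by apply: cvgZ => //; exact: cvg_rsub.
have Hs : \forall n \near \oo, subdiff g (z n) (l n).
  by apply: nearW => j; have := Hk j; rewrite /= split_pt GE3.
have HK := dloc_seq zc lc Hs.
have : dotv (- v r) y <= 0.
  rewrite -(row_mxKr (0 : 'rV[R]_m) (- v r)).
  apply: (@lim_le R nat \oo _ (fun j => dotv (rsubmx (wk j)) y)).
    by apply: cvg_dotv; [exact: cvg_rsub | exact: cvg_cst].
  apply: filterS HK => j Kj; have := K_le Kj yv.
  rewrite /l dotvDl dotvZl gerDl.
  by rewrite pmulr_rle0.
by rewrite leNgt vy.
Qed.

Lemma maxB (x : R) : Num.max x 0 - Num.max (- x) 0 = x.
Proof.
have [x0|x0] := leP 0 x.
  have h2 : Num.max (- x) 0 = 0 by rewrite max_r // oppr_le0.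
  by rewrite ?h2 ?subr0 ?max_l.
have h2 : Num.max (- x) 0 = - x by rewrite max_l // oppr_ge0 ltW.
by rewrite ?h2 ?sub0r ?opprK ?max_r ?sub0r ?opprK // ltW.
Qed.

Lemma dir2 : (forall w, graph_deriv (subdiff g) zb lb w = coderiv (subdiff g) zb lb w) ->
  ri (subdiff g zb) lb.
Proof.
move=> Heq; have [rho Hrho] := choice (stepC Heq).
pose P := pinvmx V.
pose a s := \sum_(i < m) `|P i s|.
have a0 s : 0 <= a s by apply: sumr_ge0.
pose C := \sum_(s < k) (a s + \sum_(r < k) a r * rho r s) * `|q s|.
have rho0 r s : 0 <= rho r s by case: (Hrho r) => H _; exact: H.
have C0 : 0 <= C.
  apply: sumr_ge0 => s _; apply: mulr_ge0 => //; apply: addr_ge0 => //.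
  by apply: sumr_ge0 => r _; apply: mulr_ge0.
split; first exact: hlb.
exists (C + 1)^-1; split; first by rewrite invr_gt0; lra.
move=> la [Hb Haff].
pose mu := la - lb.
have Mmu : Mset mu := aff_M Haff.
have nmu : `|mu| < (C + 1)^-1.
  by move: Hb; rewrite -ball_normE /ball_ /= distrC.
pose be := mu *m P.
have mub : mu = \sum_(s < k) be 0 s *: v s.
  by rewrite -{1}(mulmxKpV Mmu) mulmx_sum; apply: eq_bigr => s _; rewrite vrow.
have beb s : `|be 0 s| <= a s * `|mu|.
  rewrite /be -dotv_col dotvC; apply: le_trans (dotv_bound _ _) _.
  by rewrite /a; apply: ler_wpM2r => //; apply: ler_sum => i _; rewrite !mxE.
pose sg s := Num.max (be 0 s) 0 + \sum_(r < k) Num.max (- be 0 r) 0 * rho r s.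
have sg0 s : 0 <= sg s.
  apply: addr_ge0; first by rewrite le_max lexx orbT.
  by apply: sumr_ge0 => r _; apply: mulr_ge0 => //; rewrite le_max lexx orbT.
have sgv : \sum_(s < k) sg s *: v s = mu.
  rewrite /sg; under eq_bigr do rewrite scalerDl.
  rewrite big_split /=.
  under [X in _ + X = _]eq_bigr do rewrite scaler_suml.
  rewrite exchange_big /=.
  under [X in _ + X = _]eq_bigr do under eq_bigr do rewrite -scalerA.
  under [X in _ + X = _]eq_bigr do rewrite -scaler_sumr.
  have -> : \sum_(r < k) Num.max (- be 0 r) 0 *: \sum_(s < k) rho r s *: v s
      = - \sum_(r < k) Num.max (- be 0 r) 0 *: v r.
    rewrite -sumrN; apply: eq_bigr => r _; case: (Hrho r) => _ <-.
    by rewrite scalerN.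
  rewrite -sumrB mub; apply: eq_bigr => s _.
  by rewrite -scalerBl maxB.
have sgq : \sum_(s < k) sg s * `|q s| <= 1.
  apply: (@le_trans _ _ (`|mu| * C)).
    rewrite /C mulr_sumr; apply: ler_sum => s _.
    rewrite mulrA; apply: ler_wpM2r => //.
    rewrite mulrDr /sg; apply: lerD.
      apply: (@le_trans _ _ `|be 0 s|); first by rewrite ge_max normr_ge0 ler_norm.
      by rewrite mulrC; exact: beb.
    rewrite mulr_sumr; apply: ler_sum => r _; rewrite mulrA; apply: ler_wpM2r => //.
    apply: (@le_trans _ _ `|be 0 r|); first by rewrite ge_max normr_ge0 -normrN ler_norm.
    by rewrite mulrC; exact: beb.
  have := normr_ge0 mu => hm.
  move: nmu; rewrite -[(C + 1)^-1]mul1r ltr_pdivlMr; last by lra.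
  nra.
have := cone_K sg0 sgq; rewrite sgv /mu addrBK'.
by [].
Qed.

Lemma main_equiv : ri (subdiff g zb) lb <->
  (forall w, graph_deriv (subdiff g) zb lb w = coderiv (subdiff g) zb lb w).
Proof. by split; [exact: dir1 | exact: dir2]. Qed.
End Main.

Unset Implicit Arguments.

Theorem corollary3p7 (R : realType) (m : nat) (g : 'rV[R]_m -> \bar R)
    (zb lb : 'rV[R]_m) :
  polyhedral_fun g -> subdiff g zb lb ->
  (ri (subdiff g zb) lb <->
   (forall w : 'rV[R]_m,
      graph_deriv (subdiff g) zb lb w = coderiv (subdiff g) zb lb w)).
Proof.
move=> [[gNoo _] [k [A [b Hepi]]]] hlb.
pose p (i : 'I_k) : 'rV[R]_m := lsubmx (row i A).
pose q (i : 'I_k) : R := A i (rshift m (@ord0 0)).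
pose bb (i : 'I_k) : R := b i ord0.
have sumE : forall i (x : 'rV[R]_m) (t : R),
    \sum_(j < m + 1) A i j * (row_mx x (const_mx t : 'rV[R]_1)) ord0 j
    = dotv (p i) x + q i * t.
  move=> i x t; rewrite big_split_ord /= big_ord1; congr (_ + _).
    by apply: eq_bigr => j _; rewrite row_mxEl !mxE.
  by rewrite row_mxEr !mxE.
have hepi : forall x t, (g x <= t%:E)%E <-> (forall i, dotv (p i) x + q i * t <= bb i).
  move=> x t; split => H.
    have : epigraph g (row_mx x (const_mx t : 'rV[R]_1)).
      by rewrite /epigraph /= row_mxKl row_mxKr mxE.
    by rewrite Hepi /= => H' i; rewrite -sumE; exact: H' i.
  have : epigraph g (row_mx x (const_mx t : 'rV[R]_1)).
    by rewrite Hepi /= => i; rewrite sumE; exact: H.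
  by rewrite /epigraph /= row_mxKl row_mxKr mxE.
exact: (main_equiv hepi gNoo hlb).
Qed.
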